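(* Let $G$ be a connected graph on an odd number $n\geq 3$ of vertices. If there is a vertex $v\in V(G)$ such that each distance set $N_i(v)$, $i=1,\dots,\epsilon(v)$, is an independent set, then $q(G)\geq 3$.
   Context: For a graph $G$ on $n$ vertices, $\mathcal{S}(G)$ is the set of real symmetric $n\times n$ matrices $A=[a_{ij}]$ with $a_{ij}\neq0$ for $i\ne j$ iff $\{i,j\}\in E(G)$ (diagonal unrestricted); $q(G)$ is the minimum number of distinct eigenvalues of a matrix in $\mathcal{S}(G)$. $N_i(v)$ is the set of vertices at distance exactly $i$ from $v$, and $\epsilon(v)$ is the maximum distance from $v$ to a vertex of $G$. *)

(* Defs.v *)
From HB Require Import structures.
From mathcomp Require Import all_boot all_order all_algebra.
From mathcomp Require Import reals.
Set Implicit Arguments. Unset Strict Implicit. Unset Printing Implicit Defensive.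
Import Order.TTheory GRing.Theory Num.Theory.

Section Graphs.
Variable n : nat.
Implicit Types (e : rel 'I_n) (u v w : 'I_n).

Definition simple_graph e := symmetric e /\ irreflexive e.

Definition walk_len e u w k : bool :=
  [exists p : k.-tuple 'I_n, path e u p && (last u p == w)].

Definition connected_graph e := forall u w, connect e u w.

(* graph distance: least k < n with a walk of length k (n if unreachable) *)
Definition gdist e u w : nat := find (walk_len e u w) (iota 0 n).

Definition dist_set e v (i : nat) : {set 'I_n} := [set w | gdist e v w == i].

Definition ecc e v : nat := \max_(w : 'I_n) gdist e v w.

Definition independent e (S : {set 'I_n}) :=
  forall x y, x \in S -> y \in S -> ~~ e x y.

End Graphs.

Local Open Scope ring_scope.

Definition in_SG (R : realType) (n : nat) (e : rel 'I_n) (A : 'M[R]_n) :=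
  A^T = A /\ forall i j : 'I_n, i != j -> (A i j != 0) = e i j.

(* q(G) >= k: every matrix in S(G) has at least k distinct eigenvalues;
   the (finite) set of eigenvalues of A is listed without repetition by s *)
Definition q_at_least (R : realType) (n : nat) (e : rel 'I_n) (k : nat) :=
  forall A : 'M[R]_n, in_SG e A ->
  forall s : seq R, uniq s -> (forall a, eigenvalue A a = (a \in s)) ->
  (k <= size s)%N.

(* Main.v *)
Require Import Defs.
From HB Require Import structures.
From mathcomp Require Import all_boot all_order all_algebra.
From mathcomp Require Import reals.
From mathcomp Require Import complex.
From mathcomp Require Import ring lra.
Set Implicit Arguments. Unset Strict Implicit. Unset Printing Implicit Defensive.
Import Order.TTheory GRing.Theory Num.Theory.
Section G.
Variables (n : nat) (e : rel 'I_n).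

Lemma walk0 u w : walk_len e u w 0 -> u = w.
Proof. by case/existsP => p /andP[_]; rewrite tuple0 /= => /eqP. Qed.

Lemma walk_ext u x y k : walk_len e u x k -> e x y -> walk_len e u y k.+1.
Proof.
case/existsP => p /andP[pp /eqP lp] exy; apply/existsP.
have sz : size (rcons (val p) y) == k.+1 by rewrite size_rcons size_tuple.
exists (Tuple sz); rewrite /= rcons_path pp lp exy last_rcons /=; by [].
Qed.

Lemma walk_short u w : connect e u w -> exists2 k, k < n & walk_len e u w k.
Proof.
case/connectP => p pp ->; case: (shortenP pp) => p' pp' up' _.
exists (size p').
  have := max_card (mem (u :: p')); rewrite card_ord (card_uniqP up') /=; by [].
apply/existsP; exists (in_tuple p'); by rewrite /= pp' eqxx.
Qed.

Hypothesis conn : connected_graph e.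

Lemma gd_has u w : has (walk_len e u w) (iota 0 n).
Proof.
have [k kn wk] := walk_short (conn u w); apply/hasP; exists k => //.
by rewrite mem_iota add0n kn.
Qed.

Lemma gd_lt u w : gdist e u w < n.
Proof. by have := gd_has u w; rewrite has_find size_iota. Qed.

Lemma gd_walk u w : walk_len e u w (gdist e u w).
Proof.
have := nth_find 0 (gd_has u w); rewrite nth_iota ?add0n //; exact: gd_lt.
Qed.

Lemma gd_min u w k : k < n -> walk_len e u w k -> gdist e u w <= k.
Proof.
move=> kn wk; rewrite leqNgt; apply/negP => /(before_find 0).
by rewrite nth_iota // add0n wk.
Qed.

Lemma gd_edge u x y : e x y -> gdist e u y <= (gdist e u x).+1.
Proof.
move=> exy; case: (ltnP (gdist e u x).+1 n) => h.
  by apply: gd_min h _; apply: walk_ext exy; apply: gd_walk.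
by apply: leq_trans (ltnW (gd_lt u y)) h.
Qed.

Lemma gd0 u w : gdist e u w = 0 -> u = w.
Proof. by move=> h; apply: walk0; rewrite -h; apply: gd_walk. Qed.

Lemma gd_bip v x y : simple_graph e ->
  (forall i, (1 <= i <= ecc e v)%N -> independent e (dist_set e v i)) -> e x y ->
  gdist e v y = (gdist e v x).+1 \/ gdist e v x = (gdist e v y).+1.
Proof.
move=> [esym eirr] Hv exy.
have h1 := gd_edge v exy; have h2 : gdist e v x <= (gdist e v y).+1.
  by apply: gd_edge; rewrite esym.
case: (ltngtP (gdist e v x) (gdist e v y)) => h.
- by left; apply/eqP; rewrite eqn_leq h1 h.
- by right; apply/eqP; rewrite eqn_leq h2 h.
- exfalso; have [g0|gpos] := posnP (gdist e v x).
    have hx := gd0 g0; have hy : v = y by apply: gd0; rewrite -h.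
    by move: exy; rewrite -hx -hy eirr.
  have := Hv (gdist e v x); rewrite gpos /ecc (@leq_bigmax _ (fun w => gdist e v w) x).
  move=> /(_ isT) ind; move: (ind x y); rewrite !inE -h eqxx exy.
  by move=> /(_ isT isT).
Qed.

End G.

Local Open Scope ring_scope.
Section Spec.
Variable R : realType.
Local Notation C := (R[i]).
Local Notation toC := (real_complex R).

Lemma spec_roots n (A : 'M[R]_n) (s : seq R) :
  A^T = A -> (forall a, eigenvalue A a = (a \in s)) ->
  exists P : 'M[C]_n, exists d : 'rV[C]_n, P \in unitmx /\
   map_mx toC A = invmx P *m diag_mx d *m P /\
   forall j, exists2 r, r \in s & d 0 j = toC r.
Proof.
move=> Asym Hs; set Ac := map_mx toC A.
have Areal : Ac \is a realmx.
  by apply/mxOverP => i j; rewrite mxE complex_real.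
have Asy : Ac \is symmetricmx.
  by apply/is_hermitianmxP; rewrite expr0 scale1r map_mx_id // /Ac map_trmx Asym.
have Aherm := realsym_hermsym Asy Areal.
have /orthomx_spectralP Aeq := hermitian_normalmx Aherm.
have dreal := hermitian_spectral_diag_real Aherm.
have Pu := spectral_unit Ac.
move: Aeq dreal Pu; set P := spectralmx Ac; set D := spectral_diag Ac => Aeq dreal Pu.
exists P, D; split; first exact: Pu.
split; first exact: Aeq.
move=> j.
have /complex_realP [r dr] : D 0 j \is Num.real by exact: (mxOverP dreal).
have Hev : eigenvalue Ac (D 0 j).
  apply/eigenvalueP; exists (delta_mx 0 j *m P).
    rewrite [in LHS]Aeq !mulmxA mulmxK //.
    rewrite mul_mx_diag scalemxAl; congr (_ *m _).
    apply/matrixP => i k; rewrite !mxE.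
    by rewrite ord1 eqxx /=; case: eqP => [->|_]; rewrite ?mulr1 ?mul1r ?mulr0 ?mul0r.
  rewrite mulmx_free_eq0 ?row_free_unit //; apply/eqP => /matrixP/(_ 0 j).
  by rewrite !mxE !eqxx => /eqP; rewrite oner_eq0.
move: Hev; rewrite dr => Hev.
exists r => //; rewrite -Hs -(eigenvalue_map (real_complex R)); exact: Hev.
Qed.

Lemma conj_sub n (P X : 'M[C]_n) c : P \in unitmx ->
  invmx P *m X *m P - c%:M = invmx P *m (X - c%:M) *m P.
Proof.
move=> Pu; rewrite mulmxBr mulmxBl; congr (_ - _).
by rewrite mul_mx_scalar -scalemxAl mulVmx // scalemx1.
Qed.

Lemma two_vals n (A : 'M[R]_n.+1) (s : seq R) :
  A^T = A -> (forall a, eigenvalue A a = (a \in s)) -> (size s <= 2)%N ->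
  exists a b, (A - a%:M) *m (A - b%:M) = 0.
Proof.
move=> Asym Hs ss.
have [P [D [Pu [Aeq Dr]]]] := spec_roots Asym Hs.
have [a [b Hab]] : exists a b, forall j, D 0 j = toC a \/ D 0 j = toC b.
  case: s Hs ss Dr => [|a [|b [|]]] // Hs ss Dr.
  - by have [r] := Dr 0.
  - by exists a, a => j; have [r] := Dr j; rewrite inE => /eqP -> ->; left.
  - exists a, b => j; have [r] := Dr j; rewrite !inE => /orP[] /eqP -> ->; by [left|right].
exists a, b; apply/eqP; rewrite -(map_mx_eq0 (real_complex R)).
rewrite map_mxM !map_mxB !map_scalar_mx /= Aeq !conj_sub //.
rewrite !mulmxA mulmxK // -!mulmxA [X in _ *m X]mulmxA.
suff -> : (diag_mx D - (toC a)%:M) *m (diag_mx D - (toC b)%:M) = 0.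
  by rewrite mul0mx mulmx0.
have -> : diag_mx D - (toC b)%:M = diag_mx (\row_k (D 0 k - toC b)).
  by apply/matrixP => i k; rewrite !mxE; case: (i == k); rewrite ?mulr1n ?mulr0n ?subr0.
rewrite mul_mx_diag; apply/matrixP => i k; rewrite !mxE.
case: eqP => [->|_]; last by rewrite !mulr0n subr0 mul0r.
by rewrite !mulr1n; case: (Hab k) => ->; rewrite subrr ?mul0r ?mulr0.
Qed.
End Spec.

Lemma connect_const (T : finType) (R : Type) (e : rel T) (f : T -> R) :
  (forall x y, e x y -> f y = f x) -> forall x y, connect e x y -> f y = f x.
Proof.
move=> H x y /connectP [p]; elim: p x => [|z p IH] x /=; first by move=> _ ->.
by case/andP => exz pz ly; rewrite (IH z pz ly) (H _ _ exz).
Qed.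

Lemma comb (R : realType) n (e : rel 'I_n) (B : 'M[R]_n) (sg : 'I_n -> R) (k : R) :
  B^T = B -> (forall i j, i != j -> (B i j != 0) = e i j) ->
  (forall x, sg x ^+ 2 = 1) -> (forall x y, e x y -> sg y = - sg x) ->
  (forall x y, connect e x y) -> \sum_x sg x != 0 -> B *m B = k%:M ->
  forall x y, x != y -> B x y = 0.
Proof.
move=> Bt Bp sg2 sgE conn sgS BB.
have Bs i j : B j i = B i j by rewrite -{1}Bt mxE.
have sgN0 x : sg x != 0 by apply/eqP => h; move: (sg2 x); rewrite h expr0n /= => /eqP; rewrite eq_sym oner_eq0.
have eN x y : e x y -> x != y.
  move=> exy; apply/eqP => h; subst y; move: (sgE _ _ exy) => e1.
  have h : sg x = 0 by lra.
  by move: (sgN0 x); rewrite h eqxx.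
have BBE x y : (B *m B) x y = \sum_j B x j * B j y by rewrite mxE.
have S1 x y : e x y -> B x x + B y y = 0.
  move=> exy; have xy := eN _ _ exy.
  have : (B *m B) x y = 0 by rewrite BB mxE (negPf xy) mulr0n.
  rewrite BBE (bigD1 x) //= (bigD1 y) /=; last by rewrite eq_sym.
  rewrite big1; last first.
    move=> j /andP[jy jx]; apply/eqP; rewrite mulf_eq0; apply/contraT => /norP[h1 h2].
    rewrite Bp 1?eq_sym // in h1; rewrite Bp // in h2.
    move: (sgE _ _ h1) (sgE _ _ h2) (sgE _ _ exy) => e1 e2 e3.
    have h : sg x = 0 by lra.
    by move: (sgN0 x); rewrite h eqxx.
  rewrite addr0 [B x y * _]mulrC -mulrDl => /eqP; rewrite mulf_eq0 => /orP[/eqP //|].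
  by move=> /eqP h; move: exy; rewrite -Bp // h eqxx.
pose f := fun z => sg z * B z z.
have fE a b : e a b -> f b = f a.
  move=> eab; rewrite /f (sgE _ _ eab); have := S1 _ _ eab.
  move=> h; have -> : B b b = - B a a by lra.
  by rewrite mulrNN.
move=> x0 y0 xy0.
set t := f x0.
have Bd z : B z z = sg z * t.
  have h := connect_const fE (conn x0 z); rewrite /t -h /f mulrA -expr2 sg2 mul1r //.
have T1 : \sum_x sg x * (B *m B) x x = \sum_x \sum_j sg x * B x j ^+ 2.
  apply eq_bigr => x _; rewrite BBE mulr_sumr; apply eq_bigr => j _.
  by rewrite (Bs x j) expr2.
have T2 : \sum_x \sum_j sg x * B x j ^+ 2 = \sum_x \sum_j sg j * B x j ^+ 2.
  rewrite exchange_big; apply eq_bigr => x _; apply eq_bigr => j _; by rewrite Bs.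
have T3 : \sum_x \sum_j (sg x + sg j) * B x j ^+ 2 = \sum_x (sg x * t ^+ 2) *+ 2.
  apply eq_bigr => x _; rewrite (bigD1 x) //= big1 ?addr0.
    by rewrite Bd exprMn sg2 mul1r -mulr2n mulrnAl.
  move=> j jx; have [h|h] := eqVneq (B x j) 0; first by rewrite h expr0n /= mulr0.
  rewrite Bp 1?eq_sym // in h; by rewrite (sgE _ _ h) subrr mul0r.
have kS : k * \sum_x sg x = \sum_x sg x * (B *m B) x x.
  rewrite mulr_sumr; apply eq_bigr => x _; by rewrite BB mxE eqxx mulr1n mulrC.
have kt : k = t ^+ 2.
  apply: (mulIf sgS); apply/eqP; have := eqrMn2r 2 (k * \sum_x sg x) (t ^+ 2 * \sum_x sg x).
  rewrite /= => <-; apply/eqP.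
  rewrite kS T1 mulr2n {2}T2 -big_split /=.
  have -> : \sum_x (\sum_j sg x * B x j ^+ 2 + \sum_j sg j * B x j ^+ 2) = \sum_x \sum_j (sg x + sg j) * B x j ^+ 2.
    by apply eq_bigr => x _; rewrite -big_split; apply eq_bigr => j _; rewrite mulrDl.
  rewrite T3 sumrMnl; congr (_ *+ 2); rewrite mulr_sumr; apply eq_bigr => x _; by rewrite mulrC.
have : \sum_(j | j != x0) B x0 j ^+ 2 = 0.
  have E1 : B x0 x0 * B x0 x0 = t ^+ 2 by rewrite Bd -expr2 exprMn sg2 mul1r.
  have := BBE x0 x0; rewrite BB mxE eqxx mulr1n (bigD1 x0) //= E1 kt.
  move/eqP; rewrite eq_sym -subr_eq0 [t ^+ 2 + _]addrC addrK => /eqP h0; rewrite -[in RHS]h0.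
  by apply eq_bigr => j _; rewrite (Bs x0 j) expr2.
move/psumr_eq0P => h; apply/eqP; rewrite -sqrf_eq0; apply/eqP; apply: h; first by move=> *; exact: sqr_ge0.
by rewrite eq_sym.
Qed.

Lemma sum_sign (R : realType) n (g : 'I_n -> nat) : odd n ->
  \sum_(x : 'I_n) (-1) ^+ (g x) != 0 :> R.
Proof.
move=> on.
have E x : (-1) ^+ g x = 1 - (odd (g x))%:R *+ 2 :> R.
  by rewrite -signr_odd; case: odd; rewrite /= ?expr0 ?expr1; lra.
rewrite (eq_bigr _ (fun x _ => E x)) sumrB sumr_const card_ord sumrMnl -natr_sum -[X in _ - X]mulr_natr -natrM subr_eq0 eqr_nat.
apply/negP => /eqP h; move: on; rewrite h oddM /= andbF //.
Qed.

Theorem mainTheorem10 (R : realType) (n : nat) (e : rel 'I_n) :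
  simple_graph e -> connected_graph e -> odd n -> (3 <= n)%N ->
  (exists v : 'I_n, forall i : nat, (1 <= i <= ecc e v)%N ->
     independent e (dist_set e v i)) ->
  q_at_least R e 3.
Proof.
case: n e => [|n] e sg_e conn oddn n3 [v Hv] A [At Ap] s us Hs; first by [].
rewrite leqNgt; apply/negP => ss.
have [a [b Hab]] := two_vals At Hs ss.
pose h := (a - b) / 2; pose c := (a + b) / 2.
pose B := A - c%:M.
have E1 : B = (A - a%:M) + h%:M.
  by apply/matrixP => i j; rewrite !mxE; case: (i == j); rewrite /= ?mulr1n ?mulr0n /h /c; lra.
have E2 : B = (A - b%:M) - h%:M.
  by apply/matrixP => i j; rewrite !mxE; case: (i == j); rewrite /= ?mulr1n ?mulr0n /h /c; lra.
have BB : B *m B = (h * h)%:M.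
  rewrite {1}E1 {1}E2 mulmxDl [X in X + _]mulmxBr [X in _ + X]mulmxBr Hab mul_mx_scalar mul_scalar_mx -scalar_mxM.
  apply/matrixP => i j; rewrite !mxE; case: (i == j); rewrite /= ?mulr1n ?mulr0n /h; by field.
have Bt : B^T = B by rewrite /B linearB /= At tr_scalar_mx.
have Bp i j : i != j -> (B i j != 0) = e i j.
  by move=> ij; rewrite /B !mxE (negPf ij) mulr0n subr0 Ap.
pose sg x := (-1) ^+ (gdist e v x) : R.
have sg2 x : sg x ^+ 2 = 1 by rewrite /sg sqrr_sign.
have sgE x y : e x y -> sg y = - sg x.
  move=> exy; rewrite /sg; case: (gd_bip conn sg_e Hv exy) => ->; rewrite exprS mulN1r ?opprK //.
have noB := comb Bt Bp sg2 sgE conn (sum_sign R (gdist e v) oddn) BB.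
have ne x y : ~~ e x y.
  case: (eqVneq x y) => [->|xy]; first by rewrite sg_e.2.
  by rewrite -Bp // noB // eqxx.
have : connect e ord0 (@Ordinal _ 1 (leq_trans (isT : 1 < 3)%N n3)) by apply: conn.
case/connectP => [[|z p]] /=; first by move=> _ [].
by rewrite (negPf (ne _ _)).
Qed.
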